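(* Let $\lambda_1,\lambda_2,\alpha>0$ and $\theta\in[-1,1]$. Let $(X_1,X_2)$ have joint pdf $$f(x_1,x_2)=\left\{1+\theta\left[1-2e^{-\lambda_1x_1}\right]\left[1-2e^{-\lambda_2x_2}\right]\right\}\lambda_1e^{-\lambda_1x_1}\lambda_2e^{-\lambda_2x_2},\qquad x_1,x_2>0$$ (exponential marginals with rates $\lambda_1,\lambda_2$ coupled by the Farlie–Gumbel–Morgenstern copula $C(u,v)=uv\{1+\theta(1-u)(1-v)\}$). Then $$P(\alpha X_1>X_2)=\frac{\lambda_2\alpha}{\lambda_1+\lambda_2\alpha}+\theta\lambda_1\left[\frac{2}{2\lambda_1+\lambda_2\alpha}+\frac{1}{\lambda_1+2\lambda_2\alpha}-\frac{2}{\lambda_1+\lambda_2\alpha}\right],$$ and the conditional pdf of $X=X_1\mid\alpha X_1>X_2$ is, for $x>0$, $$f^{w}(x;\lambda_1,\lambda_2,\alpha,\theta)=K\,e^{-\lambda_1x}\left(1-e^{-\lambda_2\alpha x}\right)\left[1-\theta e^{-\lambda_2\alpha x}\left(1-2e^{-\lambda_1x}\right)\right],\qquad K=\frac{\lambda_1}{P(\alpha X_1>X_2)}.$$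
   Context: The distribution with this pdf $f^w$ is called the Generalized Weighted Exponential Distribution (GWED) with parameters $\lambda_1,\lambda_2,\alpha>0$, $\theta\in[-1,1]$. *)

(* Defs.v *)
From Stdlib Require Import Reals Lra.
Open Scope R_scope.

Definition fgm_exp_pdf (l1 l2 th x1 x2 : R) : R :=
  (1 + th * (1 - 2 * exp (- (l1 * x1))) * (1 - 2 * exp (- (l2 * x2))))
  * (l1 * exp (- (l1 * x1))) * (l2 * exp (- (l2 * x2))).

Definition is_RInt (f : R -> R) (a b l : R) : Prop :=
  exists pr : Riemann_integrable f a b, RiemannInt pr = l.

Definition is_RInt_0_inf (f : R -> R) (l : R) : Prop :=
  (forall b, 0 <= b -> inhabited (Riemann_integrable f 0 b)) /\
  (forall eps, 0 < eps -> exists M, forall b (pr : Riemann_integrable f 0 b),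
      M <= b -> Rabs (RiemannInt pr - l) < eps).

Definition P_closed (l1 l2 a th : R) : R :=
  l2 * a / (l1 + l2 * a)
  + th * l1 * (2 / (2 * l1 + l2 * a) + 1 / (l1 + 2 * l2 * a) - 2 / (l1 + l2 * a)).

Definition gwed_pdf (K l1 l2 a th x : R) : R :=
  K * exp (- (l1 * x)) * (1 - exp (- (l2 * a * x)))
  * (1 - th * exp (- (l2 * a * x)) * (1 - 2 * exp (- (l1 * x)))).

(* Main.v *)
From Pilot Require Import Defs.
From Stdlib Require Import Reals.
From Stdlib Require Import Lra.
From Coquelicot Require Import Coquelicot.
Open Scope R_scope.

Lemma ftc_gen (F f : R -> R) (a b : R) :
  (forall x, is_derive F x (f x)) -> (forall x, continuous f x) ->
  Defs.is_RInt f a b (F b - F a) /\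
  forall pr : Riemann_integrable f a b, RiemannInt pr = F b - F a.
Proof.
  intros HD HC.
  assert (H : Coquelicot.RInt.is_RInt f a b (minus (F b) (F a))).
  { apply (is_RInt_derive F f a b); intros; auto. }
  assert (Hall : forall pr : Riemann_integrable f a b, RiemannInt pr = F b - F a).
  { intros pr. rewrite <- RInt_Reals. rewrite (is_RInt_unique _ _ _ _ H). reflexivity. }
  split; auto.
  exists (ex_RInt_Reals_0 f a b (ex_intro _ _ H)). apply Hall.
Qed.

Lemma exp_prod_bound (u : R) (l1 b : R) : 0 < l1 -> 0 <= b -> u = exp (-(l1*b)) ->
  u * (1 + l1 * b) <= 1.
Proof.
  intros Hl Hb ->.
  pose proof (exp_ineq1_le (l1*b)).
  assert (Hx : exp (-(l1*b)) * exp (l1*b) = 1).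
  { rewrite <- exp_plus. replace (-(l1*b) + l1*b) with 0 by ring. apply exp_0. }
  pose proof (exp_pos (-(l1*b))). nra.
Qed.

Lemma lin_bound k p : 0 <= k -> -1 <= p <= 1 -> -k <= k*p <= k.
Proof. intros; split; nra. Qed.


Lemma inner_int (l1 l2 th x1 T : R) :
  let u := exp (-(l1*x1)) in
  let H := fun y => l1*u*(-(exp(-(l2*y))) + th*(1-2*u)*(-(exp(-(l2*y))) + exp(-(l2*y))*exp(-(l2*y)))) in
  Defs.is_RInt (fun x2 => fgm_exp_pdf l1 l2 th x1 x2) 0 T (H T - H 0).
Proof.
  intros u H.
  eapply proj1; apply (ftc_gen H (fun x2 => fgm_exp_pdf l1 l2 th x1 x2) 0 T).
  - intros x. unfold H, fgm_exp_pdf, u. auto_derive. auto. ring.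
  - intros x. apply (ex_derive_continuous (K:=R_AbsRing) (V:=R_NormedModule)). unfold fgm_exp_pdf. auto_derive. auto.
Qed.


Import Pilot.Defs.

Theorem mainTheorem2 (l1 l2 a th : R) :
  0 < l1 -> 0 < l2 -> 0 < a -> -1 <= th <= 1 ->
  exists g : R -> R,
    (forall x1, 0 <= x1 ->
       is_RInt (fun x2 => fgm_exp_pdf l1 l2 th x1 x2) 0 (a * x1) (g x1)) /\
    is_RInt_0_inf g (P_closed l1 l2 a th) /\
    (forall x, 0 < x ->
       g x / P_closed l1 l2 a th
       = gwed_pdf (l1 / P_closed l1 l2 a th) l1 l2 a th x).
Proof.
  intros Hl1 Hl2 Ha Hth.
  set (g := fun x => l1*exp(-(l1*x))*(1-exp(-(l2*a*x)))*(1 - th*exp(-(l2*a*x))*(1-2*exp(-(l1*x))))).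
  assert (Hl2a : 0 < l2*a) by (apply Rmult_lt_0_compat; auto).
  set (c1 := l1 + l2*a). set (c2 := 2*l1+l2*a). set (c3 := l1+2*(l2*a)). set (c4 := 2*l1+2*(l2*a)).
  assert (Hc1 : 0 < c1) by (unfold c1; lra).
  assert (Hc2 : 0 < c2) by (unfold c2; lra).
  assert (Hc3 : 0 < c3) by (unfold c3; lra).
  assert (Hc4 : 0 < c4) by (unfold c4; lra).
  set (G := fun x => let u := exp(-(l1*x)) in let v := exp(-(l2*a*x)) in
     -l1*(u/l1 - u*v/c1 - th*u*v/c1 + 2*th*u*u*v/c2 + th*u*v*v/c3 - 2*th*u*u*v*v/c4)).
  assert (HGd : forall x, is_derive G x (g x)).
  { intros x. unfold G, g. auto_derive. auto. unfold c1, c2, c3, c4 in *. field. lra. }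
  assert (HgC : forall x, continuous g x).
  { intros x. apply (ex_derive_continuous (K:=R_AbsRing) (V:=R_NormedModule)). unfold g. auto_derive. auto. }
  assert (HG0 : G 0 = - P_closed l1 l2 a th).
  { unfold G, P_closed. rewrite !Rmult_0_r, !Ropp_0, exp_0. unfold c1,c2,c3,c4 in *. field. lra. }
  exists g. split; [|split].
  - intros x1 _.
    pose proof (inner_int l1 l2 th x1 (a*x1)) as Hi. simpl in Hi.
    match goal with |- Defs.is_RInt _ _ _ ?v => match type of Hi with Defs.is_RInt _ _ _ ?w => replace v with w; auto end end.
    unfold g. rewrite !Rmult_0_r, !Ropp_0, exp_0.
    replace (l2*(a*x1)) with (l2*a*x1) by ring. ring.
  - split.
    + intros b _. constructor. apply (ex_RInt_Reals_0 g 0 b).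
      eexists. apply (is_RInt_derive G g 0 b); intros; auto.
    + intros eps Heps.
      set (k1 := l1/c1). set (k2 := l1/c2). set (k3 := l1/c3). set (k4 := l1/c4).
      assert (Hk1 : 0 <= k1) by (unfold k1; apply Rlt_le, Rdiv_lt_0_compat; lra).
      assert (Hk2 : 0 <= k2) by (unfold k2; apply Rlt_le, Rdiv_lt_0_compat; lra).
      assert (Hk3 : 0 <= k3) by (unfold k3; apply Rlt_le, Rdiv_lt_0_compat; lra).
      assert (Hk4 : 0 <= k4) by (unfold k4; apply Rlt_le, Rdiv_lt_0_compat; lra).
      set (C := 1 + 2*k1 + 2*k2 + k3 + 2*k4).
      exists (C/(eps*l1)). intros b pr Hb.
      assert (HC : 0 < C) by (unfold C; lra).
      assert (HM : 0 < C/(eps*l1)) by (apply Rdiv_lt_0_compat; nra).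
      assert (Hb0 : 0 <= b) by lra.
      assert (Hbe : C <= eps*l1*b).
      { apply Rmult_le_compat_l with (r := eps*l1) in Hb; [|nra].
        unfold Rdiv in Hb. rewrite <- Rmult_assoc, (Rmult_comm (eps*l1) C), Rmult_assoc, Rinv_r in Hb by nra. lra. }
      destruct (ftc_gen G g 0 b HGd HgC) as [_ Hpr].
      rewrite Hpr, HG0.
      replace (G b - - P_closed l1 l2 a th - P_closed l1 l2 a th) with (G b) by ring.
      set (u := exp(-(l1*b))). set (v := exp(-(l2*a*b))).
      assert (HGb : G b = u * (-1 + k1*v + k1*(th*v) - 2*k2*(th*u*v) - k3*(th*v*v) + 2*k4*(th*u*v*v))).
      { unfold G, u, v, k1, k2, k3, k4. unfold c1, c2, c3, c4 in *. field. lra. }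
      assert (Hu0 : 0 < u) by apply exp_pos.
      assert (Hv0 : 0 < v) by apply exp_pos.
      assert (Hub : u * (1 + l1*b) <= 1) by (apply exp_prod_bound; auto).
      assert (Hvb : v * (1 + l2*a*b) <= 1) by (apply exp_prod_bound; auto).
      assert (0 <= l1*b) by (apply Rmult_le_pos; lra).
      assert (0 <= l2*a*b) by (apply Rmult_le_pos; lra).
      assert (Hu1 : u <= 1) by nra.
      assert (Hv1 : v <= 1) by nra.
      assert (P1 : -1 <= th*v <= 1) by (split; nra).
      assert (Huv : 0 <= u*v <= 1) by (split; nra).
      assert (Hvv : 0 <= v*v <= 1) by (split; nra).
      assert (Huvv : 0 <= u*v*v <= 1) by (split; nra).
      assert (P2 : -1 <= th*u*v <= 1) by (rewrite Rmult_assoc; split; nra).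
      assert (P3 : -1 <= th*v*v <= 1) by (rewrite Rmult_assoc; split; nra).
      assert (P4 : -1 <= th*u*v*v <= 1) by (rewrite !Rmult_assoc, <- (Rmult_assoc u); split; nra).
      pose proof (lin_bound k1 _ Hk1 P1). pose proof (lin_bound k2 _ Hk2 P2).
      pose proof (lin_bound k3 _ Hk3 P3). pose proof (lin_bound k4 _ Hk4 P4).
      assert (Hkv : 0 <= k1*v <= k1) by (split; nra).
      set (Rr := -1 + k1*v + k1*(th*v) - 2*k2*(th*u*v) - k3*(th*v*v) + 2*k4*(th*u*v*v)) in HGb.
      assert (HR : Rabs Rr <= C) by (unfold Rr, C; apply Rabs_le; split; lra).
      rewrite HGb, Rabs_mult, (Rabs_pos_eq u) by lra.
      assert (u * Rabs Rr <= u * C) by (apply Rmult_le_compat_l; lra).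
      assert (u * C < eps) by nra.
      lra.
  - intros x _. unfold g, gwed_pdf. unfold Rdiv. ring.
Qed.
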